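(* Let $R$ be a ring and $T$ a right $R$-module. Assume that either (1) $R$ is right perfect, or (2) $R$ is semiperfect and $T$ is finitely presented, or (3) $T$ has projective dimension at most $1$. Then $T$ is $\tau$-rigid if and only if $\operatorname{Gen}T\subseteq T^{\perp}$. In particular, if $T$ is quasi-tilting, then $T$ is $\tau$-rigid.
   Context: A module $T$ is $\tau$-rigid if there exists a projective presentation $P_1\xrightarrow{\varphi}P_0\to T\to 0$ such that $\operatorname{Hom}_R(\varphi,M)$ is surjective for every $M\in\operatorname{Gen}T$. $\operatorname{Gen}T$ is the class of epimorphic images of direct sums of copies of $T$; $\operatorname{Pres}T$ is the class of modules $M$ admitting an exact sequence $T_1\to T_0\to M\to 0$ with $T_0,T_1$ direct summands of direct sums of copies of $T$; $T^{\perp}=\{M:\operatorname{Ext}^1_R(T,M)=0\}$. $T$ is quasi-tilting if $\operatorname{Pres}T=\operatorname{Gen}T\subseteq T^{\perp}$. *)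

(* Defs.v *)
(* Right R-modules are modelled as left modules over the
   converse ring R^c (lmodType R^c); module maps are {linear _ -> _}. *)
From HB Require Import structures.
From mathcomp Require Import all_boot all_order all_algebra.
Set Implicit Arguments. Unset Strict Implicit. Unset Printing Implicit Defensive.
Import GRing.Theory.
Local Open Scope ring_scope.

Section ModDefs.
Variable R : pzRingType.
Notation rmod := (lmodType R^c).

Definition surj {U V : Type} (f : U -> V) := forall v, exists u, f u = v.
Definition exact_at {U V W : rmod} (a : U -> V) (b : V -> W) :=
  forall v, b v = 0 <-> exists u, a u = v.

Definition submodule {P : rmod} (S : P -> Prop) :=
  S 0 /\ (forall x y, S x -> S y -> S (x + y)) /\ (forall (r : R^c) x, S x -> S (r *: x)).

Definition projective (P : rmod) :=
  forall (M N : rmod) (p : {linear M -> N}) (f : {linear P -> N}),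
    surj p -> exists g : {linear P -> M}, forall x, p (g x) = f x.

(* free right module R^n = row vectors over R^c *)
Definition fin_generated (T : rmod) :=
  exists (n : nat) (b : {linear 'rV[R^c]_n -> T}), surj b.

Definition fin_presented (T : rmod) :=
  exists (n m : nat) (a : {linear 'rV[R^c]_m -> 'rV[R^c]_n})
         (b : {linear 'rV[R^c]_n -> T}), surj b /\ exact_at a b.

Definition pd_le1 (T : rmod) :=
  exists (P1 P0 : rmod) (a : {linear P1 -> P0}) (b : {linear P0 -> T}),
    [/\ projective P1, projective P0, injective a, surj b & exact_at a b].

Definition projective_cover (P M : rmod) (p : {linear P -> M}) :=
  [/\ projective P, surj p &
      forall S : P -> Prop, submodule S ->
        (forall x, exists y z, S y /\ p z = 0 /\ x = y + z) ->
        forall x, S x].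

(* Bass: R right perfect iff every right R-module has a projective cover;
         R semiperfect iff every f.g. right R-module has a projective cover *)
Definition right_perfect :=
  forall M : rmod, exists (P : rmod) (p : {linear P -> M}), projective_cover p.
Definition semiperfect :=
  forall M : rmod, fin_generated M ->
    exists (P : rmod) (p : {linear P -> M}), projective_cover p.

(* Gen T: M is an epimorphic image of T^(I); a map T^(I) -> M is a family
   (f_i)_i of maps T -> M, and its image consists of finite sums of f_i(t). *)
Definition Gen (T M : rmod) :=
  exists (I : Type) (f : I -> {linear T -> M}),
    forall m : M, exists s : seq (I * T), m = \sum_(q <- s) f q.1 q.2.

(* Add T: X is a direct summand of some T^(I).  A map X -> T^(I) is a family
   (h_i) of maps X -> T with, for every x, h_i x = 0 for almost all i; the
   composite X -> T^(I) -> X (second map given by (g_i)) is the identity. *)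
Definition Add (T X : rmod) :=
  exists (I : eqType) (g : I -> {linear T -> X}) (h : I -> {linear X -> T}),
    forall x : X, exists s : seq I,
      uniq s /\ (forall i, i \notin s -> h i x = 0) /\
      x = \sum_(i <- s) g i (h i x).

Definition Pres (T M : rmod) :=
  exists (T1 T0 : rmod) (a : {linear T1 -> T0}) (b : {linear T0 -> M}),
    [/\ Add T T1, Add T T0, surj b & exact_at a b].

(* Ext^1_R(T,M) = 0 (Yoneda description: every extension 0 -> M -> E -> T -> 0
   splits) *)
Definition Ext1_zero (T M : rmod) :=
  forall (E : rmod) (i : {linear M -> E}) (p : {linear E -> T}),
    injective i -> surj p -> exact_at i p ->
    exists s : {linear T -> E}, forall t, p (s t) = t.

Definition perp (T M : rmod) := Ext1_zero T M.

Definition tau_rigid (T : rmod) :=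
  exists (P1 P0 : rmod) (phi : {linear P1 -> P0}) (pi : {linear P0 -> T}),
    [/\ projective P1, projective P0, surj pi, exact_at phi pi &
      forall M : rmod, Gen T M ->
        forall g : {linear P1 -> M},
          exists f : {linear P0 -> M}, forall x, f (phi x) = g x].

Definition quasi_tilting (T : rmod) :=
  (forall M : rmod, Pres T M <-> Gen T M) /\
  (forall M : rmod, Gen T M -> perp T M).

End ModDefs.

(* Main.v *)
From HB Require Import structures.
Require Import Defs.
From mathcomp Require Import all_boot all_order all_algebra.
From mathcomp Require Import boolp.
Set Implicit Arguments. Unset Strict Implicit. Unset Printing Implicit Defensive.
Import GRing.Theory.
Local Open Scope ring_scope.
Section Sub.
Variables (R : pzRingType) (V : lmodType R^c).
Record subm := SubM { sp : V -> Prop; spP : submodule sp }.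
Variable U : subm.
Lemma sub0 : sp U 0. Proof. by case: (spP U). Qed.
Lemma subD x y : sp U x -> sp U y -> sp U (x + y). Proof. by case: (spP U) => _ [hD hZ]; auto. Qed.
Lemma subZ (r : R^c) x : sp U x -> sp U (r *: x). Proof. by case: (spP U) => _ [hD hZ]; auto. Qed.
Lemma subN x : sp U x -> sp U (- x).
Proof. by move=> h; rewrite -scaleN1r; apply: subZ. Qed.
Lemma subB x y : sp U x -> sp U y -> sp U (x - y).
Proof. by move=> hx hy; apply: subD => //; apply: subN. Qed.
End Sub.


Section SubT.
Variables (R : pzRingType) (V : lmodType R^c).
Definition subT (U : subm V) := {v : V | sp U v}.
HB.instance Definition _ U := gen_eqMixin (subT U).
HB.instance Definition _ U := gen_choiceMixin (subT U).
Variable U : subm V.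
Definition s_zero : subT U := exist _ 0 (sub0 U).
Definition s_add (x y : subT U) : subT U := exist _ _ (subD (proj2_sig x) (proj2_sig y)).
Definition s_opp (x : subT U) : subT U := exist _ _ (subN (proj2_sig x)).
Definition s_scale (r : R^c) (x : subT U) : subT U := exist _ _ (subZ r (proj2_sig x)).
Lemma s_eq (x y : subT U) : proj1_sig x = proj1_sig y -> x = y.
Proof. case: x => x hx; case: y => y hy /= e; subst y; congr exist; exact: Prop_irrelevance. Qed.
Lemma s_addA : associative s_add. Proof. by move=> x y z; apply: s_eq => /=; rewrite addrA. Qed.
Lemma s_addC : commutative s_add. Proof. by move=> x y; apply: s_eq => /=; rewrite addrC. Qed.
Lemma s_add0 : left_id s_zero s_add. Proof. by move=> x; apply: s_eq => /=; rewrite add0r. Qed.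
Lemma s_addN : left_inverse s_zero s_opp s_add. Proof. by move=> x; apply: s_eq => /=; rewrite addNr. Qed.
HB.instance Definition _ := GRing.isZmodule.Build (subT U) s_addA s_addC s_add0 s_addN.
Lemma s_scaleA a b v : s_scale a (s_scale b v) = s_scale (a * b) v.
Proof. by apply: s_eq => /=; rewrite scalerA. Qed.
Lemma s_scale1 : left_id 1 s_scale. Proof. by move=> x; apply: s_eq => /=; rewrite scale1r. Qed.
Lemma s_scaleDr : right_distributive s_scale +%R. Proof. by move=> a x y; apply: s_eq => /=; rewrite scalerDr. Qed.
Lemma s_scaleDl v : {morph s_scale^~ v: a b / a + b}. Proof. by move=> a b; apply: s_eq => /=; rewrite scalerDl. Qed.
HB.instance Definition _ := GRing.Zmodule_isLmodule.Build R^c (subT U) s_scaleA s_scale1 s_scaleDr s_scaleDl.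
Lemma sval_lin : linear (fun x : subT U => proj1_sig x). Proof. by []. Qed.
End SubT.
Section Quot.
Variables (R : pzRingType) (V : lmodType R^c).
Definition cls (U : subm V) (v : V) := fun w => sp U (w - v).
Definition quotT (U : subm V) := {C : V -> Prop | exists v, C = cls U v}.
HB.instance Definition _ U := gen_eqMixin (quotT U).
HB.instance Definition _ U := gen_choiceMixin (quotT U).
Variable U : subm V.
Definition qpi (v : V) : quotT U := exist _ (cls U v) (ex_intro _ v erefl).
Lemma qpi_eq v w : qpi v = qpi w <-> sp U (v - w).
Proof.
split.
  move=> /(congr1 (@proj1_sig _ _)) /= e.
  have : cls U v v by rewrite /cls subrr; apply: sub0.
  by rewrite e.
move=> h; apply: (@eq_exist_uncurried _ _ _ _); simpl.
have e : cls U v = cls U w.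
  apply: funext => x; apply: propext; rewrite /cls; split=> hx.
    by have := subD hx h; rewrite addrA subrK.
  by have := subB hx h; rewrite opprB addrA subrK.
exists e; exact: Prop_irrelevance.
Qed.
Lemma qpi_surj (x : quotT U) : exists v, x = qpi v.
Proof.
case: x => C [v e]; exists v; subst C; rewrite /qpi; congr exist; exact: Prop_irrelevance.
Qed.
Definition qrep (x : quotT U) : V := projT1 (cid (qpi_surj x)).
Lemma qrepK x : qpi (qrep x) = x.
Proof. by rewrite /qrep; case: cid => v /= ->. Qed.
Lemma qrep_pi v : sp U (qrep (qpi v) - v).
Proof. by apply/qpi_eq; rewrite qrepK. Qed.

Definition q_zero : quotT U := qpi 0.
Definition q_add (x y : quotT U) : quotT U := qpi (qrep x + qrep y).
Definition q_opp (x : quotT U) : quotT U := qpi (- qrep x).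
Definition q_scale (r : R^c) (x : quotT U) : quotT U := qpi (r *: qrep x).
Lemma q_addE v w : q_add (qpi v) (qpi w) = qpi (v + w).
Proof.
apply/qpi_eq; have := subD (qrep_pi v) (qrep_pi w).
by rewrite opprD addrACA !addrA.
Qed.
Lemma q_oppE v : q_opp (qpi v) = qpi (- v).
Proof. by apply/qpi_eq; have := subN (qrep_pi v); rewrite opprB opprK addrC. Qed.
Lemma q_scaleE r v : q_scale r (qpi v) = qpi (r *: v).
Proof. by apply/qpi_eq; have := subZ r (qrep_pi v); rewrite scalerBr. Qed.

Lemma q_addA : associative q_add.
Proof.
move=> x y z; case: (qpi_surj x) => a ->; case: (qpi_surj y) => b ->; case: (qpi_surj z) => c ->.
by rewrite !q_addE addrA.
Qed.
Lemma q_addC : commutative q_add.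
Proof. by move=> x y; case: (qpi_surj x) => a ->; case: (qpi_surj y) => b ->; rewrite !q_addE addrC. Qed.
Lemma q_add0 : left_id q_zero q_add.
Proof. by move=> x; case: (qpi_surj x) => a ->; rewrite /q_zero q_addE add0r. Qed.
Lemma q_addN : left_inverse q_zero q_opp q_add.
Proof. by move=> x; case: (qpi_surj x) => a ->; rewrite q_oppE q_addE addNr. Qed.
HB.instance Definition _ := GRing.isZmodule.Build (quotT U) q_addA q_addC q_add0 q_addN.
Lemma qpiD v w : qpi v + qpi w = qpi (v + w). Proof. exact: q_addE. Qed.
Lemma qpiN v : - qpi v = qpi (- v). Proof. exact: q_oppE. Qed.
Lemma qpi0 : qpi 0 = 0 :> quotT U. Proof. by []. Qed.
Lemma q_scaleA a b v : q_scale a (q_scale b v) = q_scale (a * b) v.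
Proof. by case: (qpi_surj v) => x ->; rewrite !q_scaleE scalerA. Qed.
Lemma q_scale1 : left_id 1 q_scale.
Proof. by move=> v; case: (qpi_surj v) => x ->; rewrite !q_scaleE scale1r. Qed.
Lemma q_scaleDr : right_distributive q_scale +%R.
Proof.
move=> a x y; case: (qpi_surj x) => u ->; case: (qpi_surj y) => w ->.
by rewrite qpiD !q_scaleE qpiD scalerDr.
Qed.
Lemma q_scaleDl v : {morph q_scale^~ v: a b / a + b}.
Proof.
move=> a b; case: (qpi_surj v) => x ->.
by rewrite !q_scaleE qpiD scalerDl.
Qed.
HB.instance Definition _ := GRing.Zmodule_isLmodule.Build R^c (quotT U) q_scaleA q_scale1 q_scaleDr q_scaleDl.
Lemma qpiZ r v : r *: qpi v = qpi (r *: v) :> quotT U. Proof. exact: q_scaleE. Qed.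

Lemma qpi_lin : linear qpi.
Proof. by move=> a x y; rewrite qpiZ qpiD. Qed.
End Quot.

Section Gen.
Variable R : pzRingType.
Notation rmod := (lmodType R^c).

Definition mkLin (U V : rmod) (f : U -> V) (H : linear f) : {linear U -> V} :=
  HB.pack f (GRing.isLinear.Build R^c U V *:%R f H).
Lemma mkLinE (U V : rmod) (f : U -> V) (H : linear f) x : mkLin H x = f x.
Proof. by []. Qed.

Definition kerS (U V : rmod) (h : {linear U -> V}) : subm U.
Proof.
refine (@SubM _ _ (fun x => h x = 0) _).
split; first exact: linear0.
split.
  move=> x y /= hx hy; transitivity (h x + h y); first exact: linearD.
  by rewrite hx hy addr0.
move=> r x /= hx; transitivity (r *: h x); first exact: linearZ_LR.
by rewrite hx scaler0.
Defined.

Lemma factor_surj (A B C : rmod) (pi : {linear A -> B}) (d : {linear A -> C}) :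
  surj pi -> (forall x, pi x = 0 -> d x = 0) ->
  exists s : {linear B -> C}, forall x, s (pi x) = d x.
Proof.
move=> Hs Hk.
pose pre b := proj1_sig (cid (Hs b)).
have preP b : pi (pre b) = b by rewrite /pre; case: cid.
have dE x y : pi x = pi y -> d x = d y.
  by move=> e; apply/eqP; rewrite -subr_eq0 -linearB; apply/eqP/Hk; rewrite linearB e subrr.
have lin : linear (fun b => d (pre b)).
  move=> a x y; rewrite -linearP; apply: dE; by rewrite linearP !preP.
exists (mkLin lin) => x; rewrite mkLinE; apply: dE; exact: preP.
Qed.

Lemma factor_inj (A N E : rmod) (i : {linear N -> E}) (d : {linear A -> E}) :
  injective i -> (forall x, exists n, i n = d x) ->
  exists f : {linear A -> N}, forall x, i (f x) = d x.
Proof.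
move=> Hi Hd.
pose f x := proj1_sig (cid (Hd x)).
have fP x : i (f x) = d x by rewrite /f; case: cid.
have lin : linear f.
  move=> a x y; apply: Hi; by rewrite linearP !fP linearP.
by exists (mkLin lin) => x; rewrite mkLinE.
Qed.

Lemma rV_projective n : projective ('rV[R^c]_n).
Proof.
move=> M N p f Hs.
pose m (j : 'I_n) := proj1_sig (cid (Hs (f 'e_j))).
have mP j : p (m j) = f 'e_j by rewrite /m; case: cid.
pose g (v : 'rV[R^c]_n) := \sum_(j < n) v 0 j *: m j.
have lin : linear g.
  move=> a x y; rewrite /g scaler_sumr -big_split /=; apply: eq_bigr => j _.
  by rewrite !mxE scalerDl scalerA.
exists (mkLin lin) => x; rewrite mkLinE /g linear_sum {2}(row_sum_delta x) linear_sum.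
by apply: eq_bigr => j _; rewrite linearZ_LR mP linearZ_LR.
Qed.

End Gen.

Section Main.
Variable R : pzRingType.
Notation rmod := (lmodType R^c).

Definition lcomp (A B C : rmod) (f : {linear B -> C}) (g : {linear A -> B}) : {linear A -> C}.
Proof. refine (@mkLin R A C (fun x => f (g x)) _). by move=> a x y; rewrite !linearP. Defined.
Lemma lcompE (A B C : rmod) (f : {linear B -> C}) (g : {linear A -> B}) x : lcomp f g x = f (g x).
Proof. by []. Qed.
Definition lsub (A B : rmod) (f g : {linear A -> B}) : {linear A -> B}.
Proof.
refine (@mkLin R A B (fun x => f x - g x) _).
by move=> a x y; rewrite (linearP f a x y) (linearP g a x y) scalerBr opprD addrACA.
Defined.
Lemma lsubE (A B : rmod) (f g : {linear A -> B}) x : lsub f g x = f x - g x.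
Proof. by []. Qed.

Lemma forward (T : rmod) : tau_rigid T -> forall M : rmod, Gen T M -> perp T M.
Proof.
case=> P1 [P0 [phi [pi [HP1 HP0 Hpi Hex Htau]]]] M GM E i p Hi Hp Hip.
have [g0 Hg0] := HP0 E T p pi Hp.
have [g1 Hg1] : exists g1 : {linear P1 -> M}, forall x, i (g1 x) = lcomp g0 phi x.
  apply: factor_inj => // x; apply/Hip; rewrite lcompE Hg0; apply/Hex; by exists x.
have [f Hf] := Htau M GM g1.
have [s Hs] : exists s : {linear T -> E}, forall x, s (pi x) = lsub g0 (lcomp i f) x.
  apply: factor_surj => // x /Hex [u <-].
  by rewrite lsubE lcompE Hf Hg1 lcompE subrr.
exists s => t; case: (Hpi t) => x <-.
rewrite Hs lsubE lcompE linearB Hg0.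
have -> : p (i (f x)) = 0 by apply/Hip; exists (f x).
by rewrite subr0.
Qed.

End Main.

Section Key.
Variable R : pzRingType.
Notation rmod := (lmodType R^c).

Definition superfl (P1 P0 : rmod) (phi : {linear P1 -> P0}) :=
  forall S : P1 -> Prop, submodule S ->
    (forall x, exists y z, S y /\ phi z = 0 /\ x = y + z) -> forall x, S x.

Definition imgK (P1 P0 M : rmod) (phi : {linear P1 -> P0}) (g : {linear P1 -> M}) : subm M.
Proof.
refine (@SubM _ _ (fun m => exists l, phi l = 0 /\ m = g l) _).
split; first by exists 0; rewrite !linear0.
split.
  move=> x y [l1 [h1 ->]] [l2 [h2 ->]]; exists (l1 + l2).
  by rewrite !linearD h1 h2 addr0.
by move=> r x [l [h ->]]; exists (r *: l); rewrite !linearZ_LR h scaler0.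
Defined.

Definition pushS (P1 P0 N : rmod) (phi : {linear P1 -> P0}) (h : {linear P1 -> N}) : subm (N * P0)%type.
Proof.
refine (@SubM _ _ (fun e => exists x, e = (h x, - phi x)) _).
split; first by exists 0; rewrite !linear0 ?oppr0.
split.
  move=> e1 e2 [x1 ->] [x2 ->]; exists (x1 + x2).
  by rewrite !linearD.
by move=> r e [x ->]; exists (r *: x); rewrite !linearZ_LR.
Defined.

Lemma key (T : rmod) (P1 P0 : rmod) (phi : {linear P1 -> P0}) (pi : {linear P0 -> T}) :
  projective P1 -> projective P0 -> surj pi -> exact_at phi pi -> superfl phi ->
  (forall M : rmod, Gen T M -> perp T M) -> tau_rigid T.
Proof.
move=> HP1 HP0 Hpi Hex Hsup Hperp.
exists P1, P0, phi, pi; split => // M GM g.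
pose Lg := imgK phi g.
pose N := quotT Lg.
pose q : {linear M -> N} := mkLin (qpi_lin Lg).
have qE m : q m = qpi Lg m by [].
have q0 m : q m = 0 <-> sp Lg m.
  by rewrite qE -qpi0 qpi_eq subr0.
have qg0 l : phi l = 0 -> q (g l) = 0.
  by move=> hl; apply/q0; exists l.
have GN : Gen T N.
  case: GM => I [f Hf]; exists I, (fun j => lcomp q (f j)) => n.
  case: (qpi_surj n) => v ->; case: (Hf v) => s ->.
  exists s; rewrite -qE linear_sum; apply: eq_bigr => j _; by [].
pose U0 := pushS phi (lcomp q g).
pose E := quotT U0.
pose piE : {linear (N * P0)%type -> E} := mkLin (qpi_lin U0).
have piEE e : piE e = qpi U0 e by [].
have Hlin_i : linear (fun n : N => qpi U0 (n, 0)).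
  move=> a x y /=; rewrite qpiZ qpiD; congr qpi.
  by apply: injective_projections => //=; rewrite scaler0 addr0.
pose i : {linear N -> E} := mkLin Hlin_i.
have Hlin_d : linear (fun e : (N * P0)%type => pi e.2).
  by move=> a x y; rewrite /= linearP.
pose d : {linear (N * P0)%type -> T} := mkLin Hlin_d.
have piE_surj : surj piE by move=> x; case: (qpi_surj x) => v ->; exists v.
have [p Hp] : exists p : {linear E -> T}, forall e, p (piE e) = d e.
  apply: factor_surj => // e; rewrite piEE -qpi0 qpi_eq subr0 => -[x ->].
  rewrite mkLinE /= linearN; apply/eqP; rewrite oppr_eq0; apply/eqP.
  by apply/Hex; exists x.
have pE e : p (qpi U0 e) = pi e.2 by rewrite -piEE Hp.
have Hi : injective i.
  move=> n n'; rewrite !mkLinE qpi_eq => -[x hx].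
  have e1 : n - n' = q (g x) by exact: (congr1 fst hx).
  have e2 : 0 - 0 = - phi x by exact: (congr1 snd hx).
  have hx0 : phi x = 0 by apply/eqP; rewrite -oppr_eq0 -e2 subrr.
  by apply/eqP; rewrite -subr_eq0 e1 qg0.
have Hps : surj p by move=> t; case: (Hpi t) => x <-; exists (qpi U0 (0, x)); rewrite pE.
have Hip : exact_at i p.
  move=> e; split.
    case: (qpi_surj e) => [[n x] ->]; rewrite pE /= => /Hex [y hy].
    exists (n + q (g y)); rewrite mkLinE; apply/qpi_eq.
    exists y; rewrite -hy; apply: injective_projections => /=.
      by rewrite [n + _]addrC addrK.
    by rewrite sub0r.
  by move=> [n <-]; rewrite mkLinE pE /= linear0.
have [s Hs] := Hperp N GN E i p Hi Hps Hip.
have Hlin_j : linear (fun x : P0 => qpi U0 (0, x)).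
  move=> a x y /=; rewrite qpiZ qpiD; congr qpi.
  by apply: injective_projections => //=; rewrite scaler0 addr0.
pose j0 : {linear P0 -> E} := mkLin Hlin_j.
pose d2 := lsub j0 (lcomp s pi).
have [fb Hfb] : exists fb : {linear P0 -> N}, forall x, i (fb x) = d2 x.
  apply: factor_inj => // x; apply/Hip.
  by rewrite lsubE linearB lcompE Hs mkLinE pE /= subrr.
have Hqs : surj q by move=> n; case: (qpi_surj n) => v ->; exists v.
have [f Hf] := HP0 M N q fb Hqs.
exists f => x.
pose h := lsub g (lcomp f phi).
have hE y : h y = g y - f (phi y) by [].
have Hh : forall y, sp (kerS h) y.
  apply: Hsup; first exact: spP.
  move=> y.
  have e1 : fb (phi y) = q (g y).
    apply: Hi; rewrite Hfb lsubE lcompE mkLinE.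
    rewrite (proj2 (Hex _) (ex_intro _ y erefl)) linear0 subr0 mkLinE.
    apply/qpi_eq; exists (- y); apply: injective_projections => /=.
      by rewrite sub0r linearN qpiN.
    by rewrite linearN opprK subr0.
  have : q (h y) = 0 by rewrite hE linearB Hf e1 subrr.
  move=> /q0 [l [hl el]].
  exists (y - l), l; split => //=; last by rewrite subrK.
  transitivity (h (y - l)) => //.
  have hl' : h l = g l by rewrite hE hl linear0 subr0.
  by rewrite linearB hl' -el; exact: subrr.
have hx : g x - f (phi x) = 0 by exact: (Hh x).
by move/eqP: hx; rewrite subr_eq0 => /eqP ->.
Qed.
End Key.

Section Cases.
Variable R : pzRingType.
Notation rmod := (lmodType R^c).

Lemma cover_case (T P0 : rmod) (pi : {linear P0 -> T}) : projective P0 -> surj pi ->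
  (exists (P1 : rmod) (p1 : {linear P1 -> subT (kerS pi)}), projective_cover p1) ->
  (forall M : rmod, Gen T M -> perp T M) -> tau_rigid T.
Proof.
move=> HP0 Hpi [P1 [p1 [HP1 Hs1 Hsup1]]] Hperp.
pose vl : {linear subT (kerS pi) -> P0} := mkLin (@sval_lin _ _ (kerS pi)).
apply: (@key R T P1 P0 (lcomp vl p1) pi) => //.
  move=> v; split.
    move=> hv; case: (Hs1 (exist _ v hv)) => u hu; exists u; by rewrite lcompE mkLinE hu.
  by move=> [u <-]; rewrite lcompE mkLinE; exact: (proj2_sig (p1 u)).
move=> S HS Hd x; apply: (Hsup1 S HS) => y.
case: (Hd y) => a [b [Sa [hb ->]]]; exists a, b; split => //; split => //.
by apply: s_eq; exact: hb.
Qed.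

End Cases.

Theorem corollary5p7 (R : pzRingType) (T : lmodType R^c) :
  (right_perfect R \/ (semiperfect R /\ fin_presented T) \/ pd_le1 T) ->
  (tau_rigid T <-> (forall M : lmodType R^c, Gen T M -> perp T M)) /\
  (quasi_tilting T -> tau_rigid T).
Proof.
move=> H.
have back : (forall M : lmodType R^c, Gen T M -> perp T M) -> tau_rigid T.
  move=> Hperp; case: H => [Hrp | [[Hsp Hfp] | Hpd]].
  - case: (Hrp T) => P0 [pi [HP0 Hpi _]].
    by apply: (cover_case HP0 Hpi) => //; exact: Hrp.
  - case: Hfp => n [m [a [b [Hb Hab]]]].
    apply: (cover_case (@rV_projective R n) Hb) => //; apply: Hsp.
    have hk v : sp (kerS b) (a v) by apply/(Hab (a v)); exists v.
    have lin : linear (fun v => (exist _ (a v) (hk v) : subT (kerS b))).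
      by move=> r x y; apply: s_eq => /=; rewrite linearP.
    exists m, (mkLin lin) => -[w hw].
    case: (proj1 (Hab w) hw) => u hu; exists u; apply: s_eq => /=; exact: hu.
  - case: Hpd => P1 [P0 [a [b [HP1 HP0 Ha Hb Hab]]]].
    apply: (key HP1 HP0 Hb Hab) => // S HS Hd x.
    case: (Hd x) => y [z [Sy [hz ->]]].
    have -> : z = 0 by apply: Ha; rewrite hz linear0.
    by rewrite addr0.
split; first by split; [exact: forward | exact: back].
by case=> _ Hq; exact: back.
Qed.
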